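(* Let $\Pi$ be an $m$-round protocol, let $\delta\in(0,\frac12]$ and let $\xi\in(0,1)$. If $\xi\le\frac{\delta^2}{16m^2}$, then there exists $j\in\{0,1,\ldots,\lceil m/\sqrt\xi\rceil\}$ such that $\mathrm{border}_\Pi(\delta',\xi)\le m\sqrt\xi$ for $\delta'=\delta/2+2j\xi\in[\frac\delta2,\delta]$.
   Context: An $m$-round single-bit-message protocol is identified with the complete binary tree of height $m$, with leaf distribution $L_\Pi$; for a node $u$, $\mathrm{val}(\Pi_u)$ is the expected common output conditioned on the transcript starting with $u$. For $\delta,\xi$: $\mathrm{Border}^{\delta,\xi}_\Pi=\{u\text{ non-leaf}:\mathrm{val}(\Pi_u)\in(\delta-\xi,\delta+\xi]\text{ or }\mathrm{val}(\Pi_u)\in[1-\delta-\xi,1-\delta+\xi)\}$ and $\mathrm{border}_\Pi(\delta,\xi)=\Pr_{\ell\leftarrow L_\Pi}[\ell\in\mathrm{desc}(\mathrm{Border}^{\delta,\xi}_\Pi)]$, where $\mathrm{desc}(\mathcal S)$ is the set of nodes with an ancestor (possibly itself) in $\mathcal S$. *)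

(* Defs.v *)
From HB Require Import structures.
From mathcomp Require Import all_boot all_order all_algebra.
From mathcomp Require Import reals.
Set Implicit Arguments. Unset Strict Implicit. Unset Printing Implicit Defensive.
Import Order.TTheory GRing.Theory Num.Theory.
Local Open Scope ring_scope.

(* An m-round single-bit-message protocol is identified with the complete
   binary tree of height m.  Nodes are bit strings u : seq bool with
   size u <= m; leaves are the m.-tuple bool.  The protocol is given by its
   leaf distribution p (nonnegative, summing to 1) and the common output
   out l \in {0,1} at each leaf l. *)

Section Protocol.
Variables (R : realType) (m : nat).
Variables (p : m.-tuple bool -> R) (out : m.-tuple bool -> bool).

Definition is_prefix (u : seq bool) (l : m.-tuple bool) : bool :=
  take (size u) l == u.

Definition node_prob (u : seq bool) : R :=
  \sum_(l | is_prefix u l) p l.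

(* val(Pi_u) : expected common output conditioned on the transcript starting
   with u (irrelevant, and set to 0 by the convention x/0 = 0, when
   node_prob u = 0) *)
Definition val (u : seq bool) : R :=
  (\sum_(l | is_prefix u l) p l * (out l)%:R) / node_prob u.

Definition in_border_interval (d xi x : R) : bool :=
  ((d - xi < x) && (x <= d + xi)) || ((1 - d - xi <= x) && (x < 1 - d + xi)).

(* the non-leaf ancestors of leaf l are exactly take n l for n < m;
   border(d, xi) = Pr_{l <- L_Pi}[ l in desc(Border^{d,xi}) ] *)
Definition border (d xi : R) : R :=
  \sum_(l : m.-tuple bool | [exists n : 'I_m, in_border_interval d xi (val (take n (tval l)))]) p l.

End Protocol.

(* Main.v *)
Require Import Defs.
From HB Require Import structures.
From mathcomp Require Import all_boot all_order all_algebra.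
From mathcomp Require Import reals.
From mathcomp Require Import ring lra.
Import Order.TTheory GRing.Theory Num.Theory.
Local Open Scope ring_scope.

Lemma sum_le1 N (P : 'I_N -> bool) :
  (forall i j, P i -> P j -> i = j) -> (\sum_(j < N) (P j : nat) <= 1)%N.
Proof.
move=> H; case: (pickP P) => [j0 Pj0|none].
  rewrite (bigD1 j0) //= Pj0 big1 // => i ne; case: (boolP (P i)) => // Pi.
  by move: ne; rewrite (H _ _ Pi Pj0) eqxx.
by rewrite big1 // => i _; rewrite none.
Qed.

Lemma ex_le_sum n (P : 'I_n -> bool) :
  (([exists i, P i] : nat) <= \sum_i (P i : nat))%N.
Proof.
case: existsP => [[i Pi]|_] //.
by rewrite (bigD1 i) //= Pi.
Qed.

Lemma step_uniq (R : realType) (dl xi x : R) (i j : nat) : 0 < xi ->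
  (dl + 2 * i%:R * xi - xi < x) && (x <= dl + 2 * i%:R * xi + xi) ->
  (dl + 2 * j%:R * xi - xi < x) && (x <= dl + 2 * j%:R * xi + xi) -> i = j.
Proof.
move=> hxi /andP[a1 a2] /andP[b1 b2].
case: (ltngtP i j) => // hij; exfalso.
- have : (i.+1)%:R <= j%:R :> R by rewrite ler_nat.
  rewrite -natr1 => h.
  have : 0 <= (j%:R - i%:R - 1) * xi :> R by apply: mulr_ge0; lra.
  nra.
- have : (j.+1)%:R <= i%:R :> R by rewrite ler_nat.
  rewrite -natr1 => h.
  have : 0 <= (i%:R - j%:R - 1) * xi :> R by apply: mulr_ge0; lra.
  nra.
Qed.

Lemma step_uniq2 (R : realType) (dl xi x : R) (i j : nat) : 0 < xi ->
  (1 - (dl + 2 * i%:R * xi) - xi <= x) && (x < 1 - (dl + 2 * i%:R * xi) + xi) ->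
  (1 - (dl + 2 * j%:R * xi) - xi <= x) && (x < 1 - (dl + 2 * j%:R * xi) + xi) -> i = j.
Proof.
move=> hxi /andP[a1 a2] /andP[b1 b2].
case: (ltngtP i j) => // hij; exfalso.
- have : (i.+1)%:R <= j%:R :> R by rewrite ler_nat.
  rewrite -natr1 => h.
  have : 0 <= (j%:R - i%:R - 1) * xi :> R by apply: mulr_ge0; lra.
  nra.
- have : (j.+1)%:R <= i%:R :> R by rewrite ler_nat.
  rewrite -natr1 => h.
  have : 0 <= (i%:R - j%:R - 1) * xi :> R by apply: mulr_ge0; lra.
  nra.
Qed.

Lemma count_le2 (R : realType) (dl xi x : R) N : 0 < xi ->
  (\sum_(j < N) (in_border_interval (dl + 2 * (nat_of_ord j)%:R * xi) xi x : nat) <= 2)%N.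
Proof.
move=> hxi.
pose lo (j : nat) := (dl + 2 * j%:R * xi - xi < x) && (x <= dl + 2 * j%:R * xi + xi).
pose hi (j : nat) := (1 - (dl + 2 * j%:R * xi) - xi <= x) && (x < 1 - (dl + 2 * j%:R * xi) + xi).
apply: (@leq_trans (\sum_(j < N) ((lo j : nat) + (hi j : nat)))%N).
  apply: leq_sum => j _; rewrite /in_border_interval /lo /hi.
  by case: (_ && _); case: (_ && _).
rewrite big_split /=.
rewrite -[2%N]/(1 + 1)%N; apply: leq_add.
  apply: sum_le1 => i j Hi Hj; apply: val_inj; exact: step_uniq hxi Hi Hj.
apply: sum_le1 => i j Hi Hj; apply: val_inj; exact: step_uniq2 hxi Hi Hj.
Qed.

Theorem lemma4p26 (R : realType) (m : nat)
    (p : m.-tuple bool -> R) (out : m.-tuple bool -> bool)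
    (p_ge0 : forall l, 0 <= p l) (p_sum1 : \sum_l p l = 1)
    (delta xi : R)
    (hdelta : 0 < delta <= 1 / 2) (hxi : 0 < xi < 1)
    (hsmall : xi <= delta ^+ 2 / (16 * (m%:R) ^+ 2)) :
  exists j : nat,
    (j%:Z <= Num.ceil (m%:R / Num.sqrt xi))%R /\
    border p out (delta / 2 + 2 * j%:R * xi) xi <= m%:R * Num.sqrt xi.
Proof.
case/andP: hxi => xi0 xi1.
have sq0 : 0 < Num.sqrt xi by rewrite sqrtr_gt0.
have sqsq : Num.sqrt xi ^+ 2 = xi by rewrite sqr_sqrtr // ltW.
have sq1 : Num.sqrt xi < 1.
  rewrite -(ltr_pXn2r (n:=2)) // ?expr1n ?sqsq //; apply: ltW => //.
have m0 : (0 < m)%N.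
  case: m hsmall {p out p_ge0 p_sum1} => // hs.
  by move: hs; rewrite expr0n /= mulr0 invr0 mulr0; lra.
set c := Num.ceil (m%:R / Num.sqrt xi).
have cge : m%:R / Num.sqrt xi <= c%:~R by exact: ceil_ge.
have c0 : (0 <= c)%R by rewrite ceil_ge0; apply: (@lt_le_trans _ _ 0); [lra|apply: divr_ge0 => //; exact: ltW].
set J := `|c|%N.
have JE : J%:Z = c by rewrite /J gez0_abs.
have JR : (J%:R : R) = c%:~R by rewrite -JE.
set N := J.+1.
set B := fun (j : nat) (l : m.-tuple bool) =>
  [exists n : 'I_m, in_border_interval (delta / 2 + 2 * j%:R * xi) xi (Defs.val p out (take n (tval l)))].
have bordE j : border p out (delta / 2 + 2 * j%:R * xi) xi = \sum_l p l * (B j l : nat)%:R.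
  rewrite /border big_mkcond /=; apply: eq_bigr => l _.
  by rewrite /B; case: [exists _, _]; rewrite ?mulr1 ?mulr0.
have jok (j : 'I_N) : (j%:Z <= c)%R by rewrite -JE lez_nat -ltnS.
case: (ltnP 1 m) => hm.
- (* averaging *)
  have hsum : \sum_(j < N) border p out (delta / 2 + 2 * (nat_of_ord j)%:R * xi) xi <= 2 * m%:R.
    under eq_bigr => j _ do rewrite bordE.
    rewrite exchange_big /=.
    apply: (@le_trans _ _ (\sum_l p l * (2 * m%:R))).
      apply: ler_sum => l _; rewrite -mulr_sumr; apply: ler_wpM2l => //.
      rewrite -natr_sum -natrM ler_nat.
      apply: (@leq_trans (\sum_(j < N) \sum_(n < m)
         (in_border_interval (delta / 2 + 2 * (nat_of_ord j)%:R * xi) xi (Defs.val p out (take n (tval l))) : nat))%N).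
        by apply: leq_sum => j _; apply: ex_le_sum.
      rewrite exchange_big /=.
      apply: (@leq_trans (\sum_(n < m) 2)%N).
        by apply: leq_sum => n _; apply: count_le2.
      by rewrite sum_nat_const card_ord mulnC.
    by rewrite -mulr_suml p_sum1 mul1r.
  case: (boolP [exists j : 'I_N, border p out (delta / 2 + 2 * (nat_of_ord j)%:R * xi) xi <= m%:R * Num.sqrt xi]).
    by case/existsP => j hj; exists j; split => //; exact: jok.
  move/existsPn => hall; exfalso.
  have : \sum_(j < N) (m%:R * Num.sqrt xi) <= \sum_(j < N) border p out (delta / 2 + 2 * (nat_of_ord j)%:R * xi) xi.
    by apply: ler_sum => j _; move: (hall j); rewrite -ltNge => /ltW.
  rewrite sumr_const card_ord => h.
  have hN : (N%:R : R) = J%:R + 1 by rewrite /N -natr1.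
  have m2 : 2 <= m%:R :> R by rewrite (ler_nat R 2).
  have key : m%:R <= J%:R * Num.sqrt xi.
    rewrite JR; apply: (@le_trans _ _ (m%:R / Num.sqrt xi * Num.sqrt xi)).
      by rewrite mulfVK // gt_eqF.
    by apply: ler_wpM2r => //; apply: ltW.
  move: h; rewrite -[_ *+ N]mulr_natr hN => h.
  have : 2 * m%:R < m%:R * Num.sqrt xi * (J%:R + 1) :> R.
    have : m%:R * Num.sqrt xi * (J%:R + 1) = m%:R * (J%:R * Num.sqrt xi) + m%:R * Num.sqrt xi by ring.
    move=> ->.
    have : m%:R * m%:R <= m%:R * (J%:R * Num.sqrt xi) :> R by apply: ler_wpM2l => //; lra.
    have : 0 < m%:R * Num.sqrt xi :> R by apply: mulr_gt0 => //; lra.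
    nra.
  lra.
-
  have m1 : m = 1%N by apply/eqP; rewrite eqn_leq hm.
  set x := Defs.val p out [::].
  have Bx j l : B j l = in_border_interval (delta / 2 + 2 * j%:R * xi) xi x.
    rewrite /B; apply/existsP/idP => [[n]|h].
      have : (n < 1)%N := leq_trans (ltn_ord n) hm.
      by rewrite ltnS leqn0 => /eqP ->; rewrite take0.
    by exists (Ordinal m0); rewrite /= take0.
  have J2 : (2 <= J)%N.
    rewrite -(ler_nat R) JR; apply: le_trans cge.
    rewrite m1 ler_pdivlMr //.
    move: hsmall; rewrite m1 expr1n mulr1 => hs.
    have : delta ^+ 2 <= 1/4 by rewrite expr2; nra.
    move: sqsq; rewrite expr2 => sqsq'; nra.
  case: (boolP [exists j : 'I_N, ~~ in_border_interval (delta / 2 + 2 * (nat_of_ord j)%:R * xi) xi x]).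
    case/existsP => j hj; exists j; split; first exact: jok.
    rewrite bordE big1; first by apply: mulr_ge0 => //; lra.
    by move=> l _; rewrite Bx (negbTE hj) mulr0.
  move/existsPn => hall; exfalso.
  have := @count_le2 R (delta / 2) xi x N xi0.
  rewrite (eq_bigr (fun _ => 1%N)); last by move=> j _; move: (hall j); rewrite negbK => ->.
  by rewrite sum_nat_const card_ord muln1 /N ltnNge J2.
Qed.
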